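(* Let $r$ be even with $2\le r\le n$, let $\mathbf{x}_1,\ldots,\mathbf{x}_r\in\mathbb{F}_2^n$ be linearly independent, and let $A\in\mathrm{SGL}_n(\mathbb{F}_2)$ satisfy $\mathbf{x}_i^{\top}A^{-1}\mathbf{x}_j=1$ for all $i,j\le r$. Then there exist $\mathbf{x}_{r+1}\in\mathbb{F}_2^n$ and $s\in\{1,\ldots,r\}$ such that $\mathbf{x}_s^{\top}A^{-1}\mathbf{x}_{r+1}=1$ and $\mathbf{x}_t^{\top}A^{-1}\mathbf{x}_{r+1}=0$ for all $t\in\{1,\ldots,r+1\}\setminus\{s\}$.
   Context: $\mathrm{SGL}_n(\mathbb{F}_2)$ is the set of invertible symmetric $n\times n$ matrices over the binary field $\mathbb{F}_2$. *)

(* Defs.v *)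
From HB Require Import structures.
From mathcomp Require Import all_boot all_order all_algebra.
Set Implicit Arguments. Unset Strict Implicit. Unset Printing Implicit Defensive.
Import GRing.Theory.
Local Open Scope ring_scope.

Definition SGL (n : nat) (A : 'M['F_2]_n) : Prop := A^T = A /\ A \in unitmx.

Definition bform (n : nat) (A : 'M['F_2]_n) (x y : 'cV['F_2]_n) : 'F_2 :=
  ((x^T *m invmx A *m y) 0 0).

(* Main.v *)
Require Import Defs.
From HB Require Import structures.
From mathcomp Require Import all_boot all_order all_algebra.
Import GRing.Theory.
Local Open Scope ring_scope.

Lemma F2_add (a : 'F_2) : a + a = 0.
Proof. apply: addrr_pchar2. exact: pchar_Fp. Qed.
Lemma F2_1 (a : 'F_2) : a != 0 -> a = 1.
Proof. by case: a => -[|[|m]] H; rewrite ?eqxx // => _; apply/val_inj. Qed.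
Lemma F2_nat m : (m%:R : 'F_2) = (odd m)%:R.
Proof.
elim: m => // m IH; rewrite -[m.+1]addn1 natrD IH addn1 /=.
by case: (odd m) => /=; [exact: F2_add | rewrite add0r].
Qed.

Lemma bformDr n (A : 'M['F_2]_n) u y z : bform A u (y + z) = bform A u y + bform A u z.
Proof. by rewrite /bform mulmxDr mxE. Qed.
Lemma bformDl n (A : 'M['F_2]_n) u y z : bform A (u + y) z = bform A u z + bform A y z.
Proof. by rewrite /bform linearD /= !mulmxDl mxE. Qed.
Lemma bform0r n (A : 'M['F_2]_n) u : bform A u 0 = 0.
Proof. by rewrite /bform mulmx0 mxE. Qed.
Lemma bform0l n (A : 'M['F_2]_n) u : bform A 0 u = 0.
Proof. by rewrite /bform trmx0 !mul0mx mxE. Qed.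
Lemma bformC n (A : 'M['F_2]_n) u y : A^T = A -> bform A u y = bform A y u.
Proof.
move=> symA.
rewrite /bform -[in LHS](trmxK (_ *m y)) [in LHS]mxE !trmx_mul trmxK trmx_inv symA.
by rewrite mulmxA.
Qed.
Lemma qD n (A : 'M['F_2]_n) y z : A^T = A ->
  bform A (y + z) (y + z) = bform A y y + bform A z z.
Proof.
move=> symA.
rewrite bformDl !bformDr (bformC _ _ z y symA) -!addrA; congr (_ + _).
by rewrite addrA F2_add add0r.
Qed.

Theorem lemma4p2 (n r : nat) (x : 'I_r -> 'cV['F_2]_n) (A : 'M['F_2]_n) :
  ~~ odd r -> (2 <= r)%N -> (r <= n)%N ->
  free [seq x i | i : 'I_r] ->
  SGL A ->
  (forall i j : 'I_r, bform A (x i) (x j) = 1) ->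
  exists (y : 'cV['F_2]_n) (s : 'I_r),
    bform A (x s) y = 1 /\
    (forall t : 'I_r, t != s -> bform A (x t) y = 0) /\
    bform A y y = 0.
Proof.
move=> evr r2 rn fx [symA uA] hx.
pose X : 'M['F_2]_(n, r) := \matrix_(a, i) x i a 0.
pose M := X^T *m invmx A.
have fM : forall i y, bform A (x i) y = (M *m y) i 0.
  move=> i y; rewrite /bform /M !mxE; apply: eq_bigr => j _; congr (_ * _).
  by rewrite !mxE; apply: eq_bigr => k _; rewrite !mxE.
have fx' : free [tuple x i | i < r].
  by move: fx; rewrite /= /image_mem enumT.
have rfM : row_free M.
  apply: inj_row_free => v.
  rewrite /M mulmxA => /(congr1 (mulmx^~ A)); rewrite mulmxKV ?unitmx_inv // mul0mx => h0.
  have : X *m v^T = 0 by rewrite -[X]trmxK -trmx_mul h0 trmx0.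
  have -> : X *m v^T = \sum_i v 0 i *: [tuple x i | i < r]`_i.
    apply/colP => a; rewrite !mxE summxE; apply: eq_bigr => i _.
    by rewrite -tnth_nth tnth_mktuple !mxE mulrC.
  move/(freeP fx') => hv; apply/rowP => i; rewrite mxE; exact: hv.
case/row_freeP: rfM => N MN.
pose y s := col s N.
have fy : forall i s, bform A (x i) (y s) = (i == s)%:R.
  by move=> i s; rewrite fM /y colE mulmxA MN mul1mx !mxE eqxx andbT.
have r0 : (0 < r)%N by apply: leq_trans r2.
pose s0 : 'I_r := Ordinal r0.
case: (boolP [exists s, bform A (y s) (y s) == 0]).
  case/existsP => s /eqP hs; exists (y s), s; split; first by rewrite fy eqxx.
  by split => // t ts; rewrite fy (negbTE ts).
move/existsPn => hall.
have h1 s : bform A (y s) (y s) = 1 by apply: F2_1; exact: hall.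
pose w := x s0 + \sum_s y s.
have fw i : bform A (x i) w = 0.
  rewrite bformDr hx (big_morph _ (bformDr _ A (x i)) (bform0r _ A (x i))).
  rewrite (bigD1 i) //= fy eqxx big1 ?addr0 ?F2_add // => j ji.
  by rewrite fy eq_sym (negbTE ji).
have qw : bform A w w = 1.
  rewrite /w qD // (big_morph (fun z => bform A z z) (fun a b => qD _ A a b symA) (bform0r _ A 0)).
  under eq_bigr do rewrite h1.
  by rewrite sumr_const card_ord F2_nat (negbTE evr) addr0 hx.
exists (y s0 + w), s0; split; first by rewrite bformDr fy eqxx fw addr0.
split; first by move=> t ts; rewrite bformDr fy (negbTE ts) fw addr0.
by rewrite qD // h1 qw F2_add.
Qed.
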